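(* For any function $f:N\to L$ and any $L^+$-valued fuzzy measure $v$ on $N$, \[ \check{\mathcal{S}}_v(f) = \left[\mathop{\mathrm{SMax}}_{i=1}^p \left(f_{(i)}\mathbin{\mathrm{smin}} v(\{(1),\ldots,(i)\})\right)\right] \mathbin{\mathrm{smax}} \left[\mathop{\mathrm{SMax}}_{i=p+1}^n \left(f_{(i)}\mathbin{\mathrm{smin}} v(\{(i),\ldots,(n)\})\right)\right], \] where $(\cdot)$ is a permutation of $N$ such that $-\mathbf{1}\leq f_{(1)}\leq\cdots\leq f_{(p)}<\mathbf{0}\leq f_{(p+1)}\leq\cdots\leq f_{(n)}\leq \mathbf{1}$. Moreover, \begin{align*} \check{\mathcal{S}}_v(f) = & \left[\mathop{\mathrm{SMax}}_{A\subset N^+}\left(m(A) \mathbin{\mathrm{smin}}\Bigg[\bigwedge_{i\in A}f_i^+ \mathbin{\mathrm{smax}}\Big(- \bigwedge_{i\in A}f_i^-\Big) \Bigg] \right)\right]\mathbin{\mathrm{smax}}\\ & \left[\mathop{\mathrm{SMax}}_{A\subset N^-}\left(m(A) \mathbin{\mathrm{smin}}\Bigg[\bigwedge_{i\in A}f_i^+ \mathbin{\mathrm{smax}}\Big(- \bigwedge_{i\in A}f_i^-\Big) \Bigg] \right)\right]\mathbin{\mathrm{smax}}\\ & \left[\mathop{\mathrm{SMax}}_{A^+,A^-\neq\emptyset}\left(m(A) \mathbin{\mathrm{smin}}\Bigg[\bigwedge_{i\in A}f_i^+ \mathbin{\mathrm{smax}}\Big(- \bigwedge_{i\in A}f_i^-\Big)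 \Bigg] \right)\right], \end{align*} where $N^+:=\{i\in N\mid f_i\geq\mathbf{0}\}$, $N^-:=N\setminus N^+$, $A^+:=A\cap N^+$, $A^-:=A\cap N^-$, and $m$ is any function in the interval $[m_*,m^*]$ of Möbius transforms of $v$.
   Context: $L^+$ is a linearly ordered set with bottom $\mathbf{0}$ and top $\mathbf{1}$; $L^-:=\{-a\mid a\in L^+\}$ with reversed order ($-a\leq -b$ iff $a\geq b$), and $L:=L^+\cup L^-$ with $-\mathbf{0}$ identified with $\mathbf{0}$. $|a|=a$ if $a\in L^+$, $|a|=-a$ otherwise; $\mathrm{sign}$ takes values $-\mathbf{1},\mathbf{0},\mathbf{1}$ for $a<\mathbf{0}$, $a=\mathbf{0}$, $a>\mathbf{0}$. The symmetric maximum is $a\mathbin{\mathrm{smax}} b := -(|a|\vee|b|)$ if $b\neq -a$ and $|a|\vee|b|$ equals $-a$ or $-b$; $:=\mathbf{0}$ if $b=-a$; $:=|a|\vee|b|$ otherwise. The symmetric minimum is $a\mathbin{\mathrm{smin}} b := -(|a|\wedge|b|)$ if $\mathrm{sign}\,a\neq\mathrm{sign}\,b$, and $|a|\wedge|b|$ otherwise. $\mathop{\mathrm{SMax}}$ denotes the iterated symmetric maximum; it is unambiguous (associative) whenever all terms have the same sign, which is the case within each bracket above. $N=\{1,\ldots,n\}$; an $L^+$-valued fuzzy measure $v:\mathcal{P}(N)\to L^+$ satisfies $v(\emptyset)=\mathbf{0}$, $v(N)=\mathbf{1}$, and is monotone. The Sugeno integral of $g:N\to L^+$ is $\mathcal{S}_v(g)=\bigvee_{i=1}^n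 [g_{(i)}\wedge v(\{(i),\ldots,(n)\})]$ with $g_{(1)}\leq\cdots\leq g_{(n)}$. For $f:N\to L$, $f^+:=f\vee\mathbf{0}$, $f^-:=(-f)\vee\mathbf{0}$, and the symmetric Sugeno integral is defined by $\check{\mathcal{S}}_v(f)=\mathcal{S}_v(f^+)\mathbin{\mathrm{smax}}(-\mathcal{S}_v(f^-))$. The (ordinal) Möbius transforms of $v$ are the functions $m$ with $m_*\leq m\leq m^*$, where $m^*(A)=v(A)$ and $m_*(A)=v(A)$ if $v(A)>v(A\setminus\{j\})$ for all $j\in A$, and $m_*(A)=\mathbf{0}$ otherwise; for any such $m$, $\mathcal{S}_v(g)=\bigvee_{A\subset N}\big(\bigwedge_{i\in A}g_i\wedge m(A)\big)$. *)

(* Defs.v *)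
From mathcomp Require Import all_boot all_order fingroup perm.
Set Implicit Arguments. Unset Strict Implicit. Unset Printing Implicit Defensive.
Import Order.TTheory.
Local Open Scope order_scope.

Section SymL.
Context {d : Order.disp_t} {T : tbOrderType d}.

(* L = L^+ u L^-, with -0 identified with 0.  An element is a pair
   (neg, a) : "neg" is true for the element -a of L^-; the element -0 is
   not represented (it is 0). *)
Definition symL := {x : bool * T | x.1 ==> (x.2 != \bot)}.

Lemma mkL_proof (neg : bool) (a : T) :
  (neg && (a != \bot), a).1 ==> ((neg && (a != \bot), a).2 != \bot).
Proof. by case: neg => //=; case: (a != \bot). Qed.

Definition mkL (neg : bool) (a : T) : symL :=
  exist _ (neg && (a != \bot), a) (mkL_proof neg a).

Definition isnegL (x : symL) : bool := (val x).1.
Definition magL (x : symL) : T := (val x).2.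

Definition posL (a : T) : symL := mkL false a.
Definition zeroL : symL := posL \bot.
Definition oneL : symL := posL \top.
Definition oppL (x : symL) : symL := mkL (~~ isnegL x) (magL x).
Definition absL (x : symL) : symL := posL (magL x).

Definition leL (x y : symL) : bool :=
  match isnegL x, isnegL y with
  | true, true => magL y <= magL x
  | true, false => true
  | false, true => false
  | false, false => magL x <= magL y
  end.
Definition ltL (x y : symL) : bool := (x != y) && leL x y.
Definition maxL (x y : symL) : symL := if leL x y then y else x.

Definition sgnL (x : symL) : symL :=
  if ltL x zeroL then oppL oneL else if x == zeroL then zeroL else oneL.

Definition smax (a b : symL) : symL :=
  let m := posL (magL a `|` magL b) in
  if b == oppL a then zeroL
  else if (m == oppL a) || (m == oppL b) then oppL m
  else m.

Definition smin (a b : symL) : symL :=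
  if sgnL a != sgnL b then oppL (posL (magL a `&` magL b))
  else posL (magL a `&` magL b).

End SymL.

Arguments symL {d} T.

Section Sugeno.
Context {d : Order.disp_t} {T : tbOrderType d} {n : nat}.

Definition fuzzy_measure (v : {set 'I_n} -> T) : Prop :=
  [/\ v set0 = \bot, v setT = \top &
      forall A B : {set 'I_n}, A \subset B -> v A <= v B].

(* Sugeno integral: with (1),...,(n) the increasing rearrangement of g
   (here a fixed one, obtained by sorting), \join_i g_(i) /\ v({(i),...,(n)}) *)
Definition sugeno (v : {set 'I_n} -> T) (g : 'I_n -> T) : T :=
  let s := sort (fun i j => g i <= g j) (enum 'I_n) in
  \join_(i <- s) (g i `&` v [set x in drop (index i s) s]).

Definition fplus (f : 'I_n -> symL T) (i : 'I_n) : T := magL (maxL (f i) zeroL).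
Definition fminus (f : 'I_n -> symL T) (i : 'I_n) : T :=
  magL (maxL (oppL (f i)) zeroL).

Definition symSugeno (v : {set 'I_n} -> T) (f : 'I_n -> symL T) : symL T :=
  smax (posL (sugeno v (fplus f))) (oppL (posL (sugeno v (fminus f)))).

(* lower Moebius transform m_* (upper one is v itself) *)
Definition mob_low (v : {set 'I_n} -> T) (A : {set 'I_n}) : T :=
  if [forall j in A, v (A :\ j) < v A] then v A else \bot.

Definition mterm (m : {set 'I_n} -> T) (f : 'I_n -> symL T) (A : {set 'I_n})
  : symL T :=
  smin (posL (m A))
       (smax (posL (\meet_(i in A) fplus f i))
             (oppL (posL (\meet_(i in A) fminus f i)))).

Definition Npos (f : 'I_n -> symL T) : {set 'I_n} := [set i | leL zeroL (f i)].
Definition Nneg (f : 'I_n -> symL T) : {set 'I_n} := ~: Npos f.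

End Sugeno.

(* Main.v *)
Require Import Defs.
From mathcomp Require Import all_boot all_order fingroup perm.
From mathcomp Require Import zify.
Set Implicit Arguments. Unset Strict Implicit. Unset Printing Implicit Defensive.
Import Order.TTheory.
Local Open Scope order_scope.

Section SymLemmas.
Context {d : Order.disp_t} {T : tbOrderType d}.
Implicit Types (a b c : T) (x y : symL T).

Definition negL (a : T) : symL T := oppL (posL a).

Lemma isneg_pos a : isnegL (posL a) = false. Proof. by []. Qed.
Lemma isneg_neg a : isnegL (negL a) = (a != \bot). Proof. by []. Qed.
Lemma mag_pos a : magL (posL a) = a. Proof. by []. Qed.
Lemma mag_neg a : magL (negL a) = a. Proof. by []. Qed.
Lemma isneg_zero : isnegL (zeroL : symL T) = false. Proof. by []. Qed.
Lemma mag_zero : magL (zeroL : symL T) = \bot. Proof. by []. Qed.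

Lemma eqLE x y : (x == y) = (isnegL x == isnegL y) && (magL x == magL y).
Proof. by rewrite -val_eqE; case: x => [[? ?] ?]; case: y => [[? ?] ?]. Qed.

Lemma eqL x y : isnegL x = isnegL y -> magL x = magL y -> x = y.
Proof. by move=> h1 h2; apply/eqP; rewrite eqLE h1 h2 !eqxx. Qed.

Lemma negL0 : negL \bot = posL \bot.
Proof. by apply: eqL; rewrite ?isneg_neg ?eqxx. Qed.

Lemma symL_case x :
  x = if isnegL x then negL (magL x) else posL (magL x).
Proof.
case: x => [[b a] H]; apply: val_inj; rewrite /isnegL /magL /=.
by case: b H => //= ->.
Qed.

Lemma isneg_mag x : isnegL x -> magL x != \bot.
Proof. by case: x => [[b a] H]; rewrite /isnegL /magL /=; case: b H. Qed.

Lemma oppLK x : oppL (oppL x) = x.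
Proof.
case: x => [[b a] H]; apply: val_inj; rewrite /oppL /isnegL /magL /=.
by case: b H => /= H; [rewrite H | case: (a != \bot)].
Qed.

Lemma oppL_neg a : oppL (negL a) = posL a. Proof. exact: oppLK. Qed.
Lemma oppL_pos a : oppL (posL a) = negL a. Proof. by []. Qed.

Ltac simpL := rewrite ?isneg_pos ?isneg_neg ?mag_pos ?mag_neg ?oppL_neg ?oppL_pos.

Lemma smax_pp a b : smax (posL a) (posL b) = posL (a `|` b).
Proof.
rewrite /smax; simpL; rewrite !eqLE; simpL.
case: (eqVneq a \bot) => [->|ha]; case: (eqVneq b \bot) => [->|hb] /=.
all: rewrite ?joinxx ?join0x ?joinx0 //.
all: try rewrite (negPf hb); try rewrite (negPf ha); by rewrite //=.
Qed.

Lemma smax_nn a b : smax (negL a) (negL b) = negL (a `|` b).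
Proof.
rewrite /smax; simpL; rewrite !eqLE; simpL.
case: (eqVneq a \bot) => [->|ha]; case: (eqVneq b \bot) => [->|hb] /=.
all: rewrite ?joinxx ?join0x ?joinx0 //.
- by rewrite negL0.
- by rewrite eqxx orbT.
- by rewrite eq_sym (negPf ha) eqxx.
- by case: (leP a b) => _; rewrite eqxx ?orbT.
Qed.

Lemma smaxC x y : smax x y = smax y x.
Proof.
rewrite /smax joinC orbC; case: (eqVneq y (oppL x)) => [->|h].
  by rewrite oppLK eqxx.
case: (eqVneq x (oppL y)) => [e|//]; by rewrite e oppLK eqxx in h.
Qed.

Lemma smax_x0 x : smax x zeroL = x.
Proof.
rewrite (symL_case x); case: (isnegL x).
- by rewrite /zeroL -negL0 smax_nn joinx0.
- by rewrite /zeroL smax_pp joinx0.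
Qed.

Lemma sgn_pos a : sgnL (posL a) = if a == \bot then zeroL else oneL.
Proof.
rewrite /sgnL /ltL /leL; simpL; rewrite lex0.
case: (eqVneq a \bot) => [->|h]; first by rewrite /zeroL !eqxx.
by rewrite andbF eqLE; simpL; rewrite (negPf h) andbF.
Qed.

Lemma sgn_neg a : a != \bot -> sgnL (negL a) = negL \top.
Proof.
move=> h; rewrite /sgnL /ltL /leL; simpL; rewrite h.
by rewrite eqLE; simpL; rewrite h.
Qed.

Lemma smin_pp a b : smin (posL a) (posL b) = posL (a `&` b).
Proof.
rewrite /smin !sgn_pos; simpL.
case: (eqVneq a \bot) => [->|ha]; case: (eqVneq b \bot) => [->|hb] //=;
  rewrite ?eqxx //= ?meet0x ?meetx0 ?negL0 //; by case: ifP.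
Qed.

Lemma top_neq a : a != \bot -> (\top : T) != \bot.
Proof. by apply: contra => /eqP e; rewrite -lex0 -e lex1. Qed.

Lemma smin_np a b : smin (negL a) (posL b) = negL (a `&` b).
Proof.
case: (eqVneq a \bot) => [->|ha].
  by rewrite negL0 smin_pp meet0x negL0.
rewrite /smin sgn_neg // sgn_pos; simpL.
suff -> : negL \top != (if b == \bot then zeroL else oneL) by [].
have ht := top_neq ha.
by case: ifP => _; rewrite eqLE; simpL; rewrite ?isneg_zero ht.
Qed.

Lemma sminC x y : smin x y = smin y x.
Proof. by rewrite /smin eq_sym meetC. Qed.


Lemma symL_ind (P : symL T -> Prop) :
  (forall a, P (posL a)) -> (forall a, a != \bot -> P (negL a)) -> forall x, P x.
Proof.
move=> H1 H2 x; rewrite (symL_case x); case: ifP => h.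
  by apply: H2; apply: isneg_mag.
exact: H1.
Qed.

Definition pl x : T := magL (maxL x zeroL).
Definition mi x : T := magL (maxL (oppL x) zeroL).

Lemma pl_pos a : pl (posL a) = a.
Proof.
rewrite /pl /maxL /leL; simpL; case: ifP => //; rewrite lex0 => /eqP -> //.
Qed.

Lemma pl_neg a : pl (negL a) = \bot.
Proof.
case: (eqVneq a \bot) => [->|h]; first by rewrite negL0 pl_pos.
by rewrite /pl /maxL /leL; simpL; rewrite h.
Qed.

Lemma mi_pos a : mi (posL a) = \bot. Proof. exact: pl_neg. Qed.
Lemma mi_neg a : mi (negL a) = a.
Proof. by rewrite /mi oppL_neg; apply: pl_pos. Qed.

Lemma le0L x : leL zeroL x = ~~ isnegL x.
Proof. by rewrite /leL; case: (isnegL x) => //=; rewrite le0x. Qed.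

Lemma lt0L x : ltL x zeroL = isnegL x.
Proof.
elim/symL_ind: x => [a|a ha]; rewrite /ltL /leL; simpL.
  rewrite lex0; case: (eqVneq a \bot) => [->|h]; first by rewrite /zeroL eqxx.
  by rewrite andbF.
by rewrite ha andbT eqLE; simpL; rewrite ha.
Qed.

Lemma pl_mi_mono x y : leL x y -> pl x <= pl y /\ mi y <= mi x.
Proof.
elim/symL_ind: x => [a|a ha]; elim/symL_ind: y => [b|b hb];
  rewrite /leL; simpL; rewrite ?ha ?hb ?pl_pos ?pl_neg ?mi_pos ?mi_neg //;
  by move=> *; split; rewrite ?le0x.
Qed.

End SymLemmas.

Section Bigs.
Context {d : Order.disp_t} {T : tbOrderType d}.

Lemma big_smax_pos (I : Type) (r : seq I) (P : pred I) (F : I -> T) :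
  \big[smax/zeroL]_(i <- r | P i) posL (F i) = posL (\join_(i <- r | P i) F i).
Proof. by elim/big_rec2: _ => [|i y1 y2 _ ->]; [|exact: smax_pp]. Qed.

Lemma big_smax_neg (I : Type) (r : seq I) (P : pred I) (F : I -> T) :
  \big[smax/zeroL]_(i <- r | P i) negL (F i) = negL (\join_(i <- r | P i) F i).
Proof.
elim/big_rec2: _ => [|i y1 y2 _ ->]; [by rewrite negL0|exact: smax_nn].
Qed.

Context {n : nat} (v : {set 'I_n} -> T) (vm : fuzzy_measure v).

Definition Cf (g : 'I_n -> T) : T :=
  \join_(A : {set 'I_n}) (\meet_(i in A) g i `&` v A).

Lemma C_rank (g : 'I_n -> T) (r : 'I_n -> nat) (P : pred 'I_n) :
  (forall x y, (r x <= r y)%N -> g x <= g y) ->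
  (forall x, ~~ P x -> g x = \bot) ->
  Cf g = \join_(x | P x) (g x `&` v [set y | (r x <= r y)%N]).
Proof.
case: vm => v0 v1 vmon mono nP; apply/le_anti/andP; split.
- apply/joinsP => A _; case: (set_0Vmem A) => [->|[x0 x0A]].
    by rewrite v0 meetx0 le0x.
  case: (arg_minnP r x0A) => x xA xmin.
  case Px: (P x).
  + apply: (joins_min (j := x)) => //; apply: leI2; first exact: meets_inf.
    apply: vmon; apply/subsetP => y yA; rewrite inE; exact: xmin.
  + apply: le_trans (leIl _ _) _; apply: le_trans (meets_inf _ xA) _.
    by rewrite nP ?Px // le0x.
- apply/joinsP => x Px.
  apply: le_trans _ (joins_sup (j := [set y | (r x <= r y)%N]) _ isT).
  apply: leI2 => //; apply/meetsP => y; rewrite inE; exact: mono.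
Qed.

Lemma C_mob (g : 'I_n -> T) (m : {set 'I_n} -> T) :
  (forall A, mob_low v A <= m A /\ m A <= v A) ->
  \join_(A : {set 'I_n}) (m A `&` \meet_(i in A) g i) = Cf g.
Proof.
case: vm => v0 v1 vmon hm; apply/le_anti/andP; split.
- apply/joinsP => A _; apply: le_trans _ (joins_sup (j := A) _ isT).
  by rewrite meetC; apply: leI2 => //; case: (hm A).
- apply/joinsP => A _.
  have hA : (A \subset A) && (v A == v A) by rewrite subxx eqxx.
  case: (@arg_minnP _ A (fun B : {set 'I_n} => (B \subset A) && (v B == v A)) (fun B : {set 'I_n} => #|B|) hA) => B /andP[BA /eqP vB] Bmin.
  have mB : mob_low v B = v B.
    rewrite /mob_low; case: ifP => // /negP []; apply/forall_inP => j jB.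
    rewrite lt_def vmon ?subsetDl // andbT; apply/negP => /eqP e.
    have := Bmin (B :\ j); rewrite (subset_trans (subsetDl _ _) BA) -e vB eqxx.
    move=> /(_ isT); rewrite (cardsD1 j B) jB; lia.
  apply: le_trans _ (joins_sup (j := B) _ isT); rewrite meetC.
  apply: leI2; last exact: le_meets.
  by rewrite -vB -mB; case: (hm B).
Qed.

Lemma drop_index (s : seq 'I_n) (k : nat) (y : 'I_n) :
  uniq s -> y \in s -> (k <= size s)%N -> (y \in drop k s) = (k <= index y s)%N.
Proof.
move=> us ys ks; apply/idP/idP => h.
- rewrite leqNgt; apply/negP => hlt.
  have yt : y \in take k s.
    by rewrite -(nth_index y ys) -(nth_take _ hlt) mem_nth // size_take; case: ifP => // _; rewrite index_mem.
  move: us; rewrite -(cat_take_drop k s) cat_uniq => /and3P[_ /hasP hh _].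
  by apply: hh; exists y.
- rewrite -(nth_index y ys) -(subnKC h) -nth_drop mem_nth // size_drop.
  have := index_mem y s; rewrite ys; lia.
Qed.

Lemma sugenoC (g : 'I_n -> T) : sugeno v g = Cf g.
Proof.
rewrite /sugeno; set s := sort _ _.
have us : uniq s by rewrite sort_uniq enum_uniq.
have ms : forall x, x \in s by move=> x; rewrite mem_sort mem_enum.
have ss : sorted (fun i j => g i <= g j) s.
  by apply: sort_sorted => x y; apply: le_total.
rewrite (C_rank (r := fun x => index x s) (P := predT)) //; last first.
  move=> x y hxy; rewrite -(nth_index x (ms x)) -(nth_index x (ms y)).
  have tr : transitive (fun i j => g i <= g j) by move=> a b c; apply: le_trans.
  have rf : reflexive (fun i j => g i <= g j) by move=> a; apply: lexx.
  by apply: (sorted_leq_nth tr rf x ss); rewrite ?inE ?index_mem.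
have eS : forall i, [set x in drop (index i s) s] = [set y | (index i s <= index y s)%N].
  move=> i; apply/setP => y; rewrite !inE drop_index //.
  by apply: ltnW; rewrite index_mem.
apply/le_anti/andP; split.
- apply/joinsP_seq => i _ _; rewrite eS; exact: (joins_sup (j := i)).
- apply/joinsP => i _; rewrite -eS.
  exact: (joins_sup_seq (fun i0 => g i0 `&` v [set x in drop (index i0 s) s]) (ms i)).


Qed.

End Bigs.

Section Part1.
Context {d : Order.disp_t} {T : tbOrderType d} {n : nat}.
Context (v : {set 'I_n} -> T) (vm : fuzzy_measure v) (f : 'I_n -> symL T).
Context (s : {perm 'I_n}) (p : nat)
  (hmono : forall i j : 'I_n, (i <= j)%N -> leL (f (s i)) (f (s j)))
  (hsg : forall i : 'I_n, (i < p)%N = ltL (f (s i)) zeroL).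

Lemma fminusE i : fminus f i = mi (f i). Proof. by []. Qed.
Lemma fplusE i : fplus f i = pl (f i). Proof. by []. Qed.

Lemma negE (x : 'I_n) : isnegL (f x) = ((s^-1)%g x < p)%N.
Proof. by rewrite hsg permKV lt0L. Qed.

Lemma set_le (k : 'I_n) :
  [set s j | j : 'I_n & (j <= k)%N] = [set y | (n - (s^-1)%g (s k) <= n - (s^-1)%g y)%N].
Proof.
apply/setP => y; rewrite inE permK; apply/imsetP/idP => [[j]|h].
  rewrite inE => jk ->; rewrite permK; have := ltn_ord k; have := ltn_ord j; lia.
exists ((s^-1)%g y); rewrite ?inE ?permKV //.
have := ltn_ord k; have := ltn_ord ((s^-1)%g y); lia.
Qed.

Lemma set_ge (k : 'I_n) :
  [set s j | j : 'I_n & (k <= j)%N] = [set y | ((s^-1)%g (s k) <= (s^-1)%g y)%N].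
Proof.
apply/setP => y; rewrite inE permK; apply/imsetP/idP => [[j]|h].
  by rewrite inE => jk ->; rewrite permK.
by exists ((s^-1)%g y); rewrite ?inE ?permKV.
Qed.

Lemma part_neg :
  sugeno v (fminus f) =
  \join_(k < n | (k < p)%N) (fminus f (s k) `&` v [set s j | j : 'I_n & (j <= k)%N]).
Proof.
rewrite sugenoC // (C_rank vm (r := fun x => (n - (s^-1)%g x)%N) (P := fun x => ((s^-1)%g x < p)%N)).
- apply/le_anti/andP; split.
  + apply/joinsP => x Px; apply: (joins_min (j := (s^-1)%g x)) => //.
    by rewrite set_le !permKV.
  + apply/joinsP => k hk; apply: (joins_min (j := s k)); rewrite ?permK //.
    by rewrite set_le permK.
- move=> x y h; rewrite !fminusE.
  have : ((s^-1)%g y <= (s^-1)%g x)%N.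
    have := ltn_ord ((s^-1)%g x); have := ltn_ord ((s^-1)%g y); lia.
  by move=> /hmono; rewrite !permKV => /pl_mi_mono [].
- move=> x hx; rewrite fminusE (symL_case (f x)) negE (negPf hx); exact: mi_pos.
Qed.

Lemma part_pos :
  sugeno v (fplus f) =
  \join_(k < n | (p <= k)%N) (fplus f (s k) `&` v [set s j | j : 'I_n & (k <= j)%N]).
Proof.
rewrite sugenoC // (C_rank vm (r := fun x => ((s^-1)%g x)%N) (P := fun x => (p <= (s^-1)%g x)%N)).
- apply/le_anti/andP; split.
  + apply/joinsP => x Px; apply: (joins_min (j := (s^-1)%g x)) => //.
    by rewrite set_ge !permKV.
  + apply/joinsP => k hk; apply: (joins_min (j := s k)); rewrite ?permK //.
    by rewrite set_ge permK.
- move=> x y h; rewrite !fplusE.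
  by move: h => /hmono; rewrite !permKV => /pl_mi_mono [].
- move=> x hx; rewrite fplusE (symL_case (f x)) negE ltnNge hx /=; exact: pl_neg.
Qed.

Lemma part1 :
     symSugeno v f =
       smax
         (\big[smax/zeroL]_(k < n | (k < p)%N)
             smin (f (s k)) (posL (v [set s j | j : 'I_n & (j <= k)%N])))
         (\big[smax/zeroL]_(k < n | (p <= k)%N)
             smin (f (s k)) (posL (v [set s j | j : 'I_n & (k <= j)%N]))).
Proof.
rewrite (eq_bigr (fun k => negL (fminus f (s k) `&` v [set s j | j : 'I_n & (j <= k)%N]))); last first.
  move=> k hk; have hn : isnegL (f (s k)) by rewrite -lt0L -hsg.
  by rewrite fminusE (symL_case (f (s k))) hn smin_np mi_neg.
rewrite [X in smax _ X](eq_bigr (fun k => posL (fplus f (s k) `&` v [set s j | j : 'I_n & (k <= j)%N]))); last first.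
  move=> k hk; have hn : isnegL (f (s k)) = false by rewrite -lt0L -hsg ltnNge hk.
  by rewrite fplusE (symL_case (f (s k))) hn smin_pp pl_pos.
rewrite big_smax_neg big_smax_pos /symSugeno smaxC -part_neg -part_pos.
by [].
Qed.

End Part1.

Section Part2.
Context {d : Order.disp_t} {T : tbOrderType d} {n : nat}.
Context (v : {set 'I_n} -> T) (vm : fuzzy_measure v) (f : 'I_n -> symL T).
Context (m : {set 'I_n} -> T)
  (hm : forall A : {set 'I_n}, mob_low v A <= m A /\ m A <= v A).

Lemma m0 : m set0 = \bot.
Proof. case: vm => v0 _ _; apply/eqP; rewrite -lex0 -v0; by case: (hm set0). Qed.

Lemma oppL_pos0 : oppL (posL (\bot : T)) = posL \bot. Proof. exact: negL0. Qed.

Lemma inNpos i : (i \in Npos f) = ~~ isnegL (f i).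
Proof. by rewrite inE le0L. Qed.
Lemma inNneg i : (i \in Nneg f) = isnegL (f i).
Proof. by rewrite inE inNpos negbK. Qed.

Lemma meet_plus_bot (A : {set 'I_n}) x : x \in A -> isnegL (f x) ->
  \meet_(i in A) fplus f i = \bot.
Proof.
move=> xA hx; apply/eqP; rewrite -lex0; apply: le_trans (meets_inf _ xA) _.
by rewrite fplusE (symL_case (f x)) hx pl_neg.
Qed.

Lemma meet_minus_bot (A : {set 'I_n}) x : x \in A -> ~~ isnegL (f x) ->
  \meet_(i in A) fminus f i = \bot.
Proof.
move=> xA hx; apply/eqP; rewrite -lex0; apply: le_trans (meets_inf _ xA) _.
by rewrite fminusE (symL_case (f x)) (negPf hx) mi_pos.
Qed.

Lemma mterm_empty : mterm m f set0 = zeroL.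
Proof.
rewrite /mterm !big_set0 /smax eqxx /zeroL smin_pp m0 meet0x //.
Qed.

Lemma mterm_pos (A : {set 'I_n}) : A \subset Npos f ->
  mterm m f A = posL (m A `&` \meet_(i in A) fplus f i).
Proof.
case: (set_0Vmem A) => [->|[x xA]] hA.
  by rewrite mterm_empty m0 meet0x.
have hx : ~~ isnegL (f x) by rewrite -inNpos (subsetP hA).
rewrite /mterm (meet_minus_bot xA hx) oppL_pos0 smax_pp joinx0 smin_pp //.
Qed.

Lemma mterm_neg (A : {set 'I_n}) : A \subset Nneg f ->
  mterm m f A = negL (m A `&` \meet_(i in A) fminus f i).
Proof.
case: (set_0Vmem A) => [->|[x xA]] hA.
  by rewrite mterm_empty m0 meet0x negL0.
have hx : isnegL (f x) by rewrite -inNneg (subsetP hA).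
rewrite /mterm (meet_plus_bot xA hx) smaxC smax_x0 sminC.
by rewrite [smin _ _]smin_np meetC.
Qed.

Lemma mterm_mix (A : {set 'I_n}) :
  (A :&: Npos f != set0) && (A :&: Nneg f != set0) -> mterm m f A = zeroL.
Proof.
case/andP => /set0Pn [x] + /set0Pn [y]; rewrite !inE => /andP[xA hx] /andP[yA hy].
rewrite le0L in hx; rewrite le0L negbK in hy.
rewrite /mterm (meet_plus_bot yA hy) (meet_minus_bot xA hx) oppL_pos0 smax_pp joinx0.
by rewrite smin_pp meetx0.
Qed.

Lemma join_restrict (g : 'I_n -> T) (Q : {set 'I_n}) :
  (forall i, i \notin Q -> g i = \bot) ->
  \join_(A : {set 'I_n}) (m A `&` \meet_(i in A) g i) =
  \join_(A : {set 'I_n} | A \subset Q) (m A `&` \meet_(i in A) g i).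
Proof.
move=> hQ; apply/le_anti/andP; split.
- apply/joinsP => A _; case: (boolP (A \subset Q)) => h.
    exact: (joins_sup (j := A)).
  case/subsetPn: h => i iA iQ.
  apply: le_trans (leIr _ _) _; apply: le_trans (meets_inf _ iA) _.
  by rewrite hQ // le0x.
- by apply/joinsP => A _; apply: (joins_sup (j := A)).
Qed.

Lemma part2 :
     symSugeno v f =
       smax
         (smax
            (\big[smax/zeroL]_(A : {set 'I_n} | A \subset Npos f) mterm m f A)
            (\big[smax/zeroL]_(A : {set 'I_n} | A \subset Nneg f) mterm m f A))
         (\big[smax/zeroL]_(A : {set 'I_n} | (A :&: Npos f != set0)
                                            && (A :&: Nneg f != set0))
             mterm m f A).
Proof.
have -> : \big[smax/zeroL]_(A : {set 'I_n} | (A :&: Npos f != set0)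
                                            && (A :&: Nneg f != set0)) mterm m f A = zeroL.
  elim/big_ind: _ => //; first by move=> x y -> ->; rewrite smax_x0.
  exact: mterm_mix.
rewrite smax_x0 (eq_bigr _ mterm_pos) [X in smax _ X](eq_bigr _ mterm_neg).
rewrite big_smax_pos big_smax_neg /symSugeno !sugenoC // -!(C_mob vm _ hm).
rewrite -join_restrict; last first.
  by move=> i; rewrite inNpos negbK => h; rewrite fplusE (symL_case (f i)) h pl_neg.
rewrite -join_restrict //.
by move=> i; rewrite inNneg => h; rewrite fminusE (symL_case (f i)) (negPf h) mi_pos.
Qed.

End Part2.

Unset Implicit Arguments.
Theorem proposition4 (d : Order.disp_t) (T : tbOrderType d) (n : nat)
  (v : {set 'I_n} -> T) (f : 'I_n -> symL T) :
  fuzzy_measure v ->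
  (forall (s : {perm 'I_n}) (p : nat),
     (p <= n)%N ->
     (forall i j : 'I_n, (i <= j)%N -> leL (f (s i)) (f (s j))) ->
     (forall i : 'I_n, (i < p)%N = ltL (f (s i)) zeroL) ->
     symSugeno v f =
       smax
         (\big[smax/zeroL]_(k < n | (k < p)%N)
             smin (f (s k)) (posL (v [set s j | j : 'I_n & (j <= k)%N])))
         (\big[smax/zeroL]_(k < n | (p <= k)%N)
             smin (f (s k)) (posL (v [set s j | j : 'I_n & (k <= j)%N]))))
  /\
  (forall m : {set 'I_n} -> T,
     (forall A : {set 'I_n}, mob_low v A <= m A /\ m A <= v A) ->
     symSugeno v f =
       smax
         (smax
            (\big[smax/zeroL]_(A : {set 'I_n} | A \subset Npos f) mterm m f A)
            (\big[smax/zeroL]_(A : {set 'I_n} | A \subset Nneg f) mterm m f A))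
         (\big[smax/zeroL]_(A : {set 'I_n} | (A :&: Npos f != set0)
                                            && (A :&: Nneg f != set0))
             mterm m f A)).
Proof.
move=> vm; split.
- by move=> s p _ hmono hsg; apply: part1.
- by move=> m hm; apply: part2.
Qed.
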